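(* For any positive integer $k$, $$\sum_{\substack{n\ge1\\ k\mid n\\ p\mid n\Rightarrow p\mid k}}\frac{\log n}{n}=\frac{1}{\phi(k)}\left(\sum_{p\mid k}\frac{\log p}{p-1}+\log k\right)\asymp\frac{\log k}{\phi(k)}.$$
   Context: $p$ denotes primes, $\phi$ is Euler's function. $A\asymp B$ means $c_1B\le A\le c_2B$ for absolute positive constants $c_1,c_2$. *)

(* Defs.v *)
From HB Require Import structures.
From mathcomp Require Import all_boot all_order all_algebra.
From mathcomp Require Import all_classical all_reals all_analysis.
Set Implicit Arguments. Unset Strict Implicit. Unset Printing Implicit Defensive.
Import Order.TTheory GRing.Theory Num.Theory.
Local Open Scope ring_scope.

Definition in_range (k n : nat) : bool :=
  [&& (0 < n)%N, (k %| n)%N & all (fun p => (p %| k)%N) (primes n)].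

Definition summand (R : realType) (k : nat) (n : nat) : R :=
  if in_range k n then ln (n%:R) / n%:R else 0.

Definition closed_form (R : realType) (k : nat) : R :=
  (totient k)%:R^-1 *
  ((\sum_(p <- primes k) ln (p%:R) / (p%:R - 1)) + ln (k%:R)).

(* Main.v *)
Require Import Defs.
From HB Require Import structures.
From mathcomp Require Import all_boot all_order all_algebra.
From mathcomp Require Import all_classical all_reals all_analysis.
From mathcomp Require Import ring lra.
Import Order.TTheory GRing.Theory Num.Theory.
Import numFieldNormedType.Exports.
Local Open Scope classical_set_scope.
Local Open Scope ring_scope.

Definition smooth (s : seq nat) (m : nat) : bool :=
  (0 < m)%N && all (fun q => q \in s) (primes m).

Lemma smooth_nil m : smooth [::] m = (m == 1)%N.
Proof.
rewrite /smooth; case: m => [|[|m]] //=.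
have : primes m.+2 != [::] by rewrite primes_eq0.
by case: (primes m.+2).
Qed.

Lemma smooth_notp (p : nat) (s : seq nat) (m : nat) : p \notin s -> smooth s m -> p \notin primes m.
Proof.
move=> ps /andP[_ /allP H]; apply/negP => /H; by rewrite (negPf ps).
Qed.

Lemma smooth_bij p s : prime p -> p \notin s ->
  set_bij ([set: nat] `*`` (fun _ => [set m | smooth s m]))
          [set m | smooth (p :: s) m] (fun x => p ^ x.1 * x.2)%N.
Proof.
move=> pp ps; split.
- move=> [b m] [_ /=] sm; rewrite /smooth muln_gt0 expn_gt0 prime_gt0 //=.
  case/andP: sm => m0 /allP H; rewrite m0 /=.
  apply/allP => q; rewrite mem_primes => /and3P[qp _].
  rewrite Euclid_dvdM // Euclid_dvdX // => /orP[/andP[qdp _]|qdm].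
    by rewrite dvdn_prime2 // in qdp; rewrite in_cons qdp.
  by rewrite in_cons H ?orbT // mem_primes qp m0.
- move=> [b1 m1] [b2 m2]; rewrite !inE => -[_ /= s1] [_ /= s2] /= E.
  have n1 := smooth_notp _ _ _ ps s1; have n2 := smooth_notp _ _ _ ps s2.
  case/andP: s1 => m10 _; case/andP: s2 => m20 _.
  have pb0 b : (0 < p ^ b)%N by rewrite expn_gt0 prime_gt0.
  have L : b1 = b2.
    have := congr1 (logn p) E.
    rewrite !lognM // !pfactorK //.
    have -> : logn p m1 = 0%N by apply/eqP; rewrite eqn0Ngt logn_gt0.
    have -> : logn p m2 = 0%N by apply/eqP; rewrite eqn0Ngt logn_gt0.
    by rewrite !addn0.
  subst b2; congr pair.
  by apply/eqP; rewrite -(eqn_pmul2l (pb0 b1)) E.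
- move=> m /= sm; case/andP: (sm) => m0 /allP H.
  set b := logn p m.
  have pb0 : (0 < p ^ b)%N by rewrite expn_gt0 prime_gt0.
  have Em : m = (p ^ b * (m %/ p ^ b))%N by rewrite mulnC divnK // pfactor_dvdnn.
  have m'0 : (0 < m %/ p ^ b)%N.
    by move: m0; rewrite {1}Em muln_gt0 => /andP[].
  have l0 : logn p (m %/ p ^ b) = 0%N.
    have := congr1 (logn p) Em; rewrite lognM // pfactorK // -/b.
    by move/eqP; rewrite -{1}[b]addn0 eqn_add2l => /eqP <-.
  exists (b, (m %/ p ^ b)%N); last by rewrite /= -Em.
  split => //=.
  rewrite /smooth m'0 /=; apply/allP => q qm.
  have qm' : q \in primes m.
    move: qm; rewrite !mem_primes m0 => /and3P[-> _ qd] /=.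
    by apply: dvdn_trans qd _; exact/dvdn_div/pfactor_dvdnn.
  have := H q qm'; rewrite in_cons => /orP[/eqP qp|//].
  by subst q; move: qm; rewrite -logn_gt0 l0.
Qed.

Lemma esumZ_nat (R : realType) (P : pred nat) (c : R) (a : nat -> \bar R) :
  0 <= c -> (forall n, P n -> (0 <= a n)%E) ->
  (\esum_(i in [set x | P x]) (c%:E * a i) = c%:E * \esum_(i in [set x | P x]) a i)%E.
Proof.
move=> c0 a0; rewrite -!nneseries_esum //; last first.
  by move=> n Pn; rewrite mule_ge0 // ?lee_fin // a0.
exact: nneseriesZl.
Qed.

Lemma esum_cons (R : realType) p s (f : nat -> \bar R) : prime p -> p \notin s ->
  (forall m, (0 <= f m)%E) ->
  \esum_(m in [set m | smooth (p :: s) m]) f m =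
  \esum_(b in [set: nat]) \esum_(m in [set m | smooth s m]) f (p ^ b * m)%N.
Proof.
move=> pp ps f0.
rewrite (reindex_esum _ _ _ _ (smooth_bij _ _ pp ps)).
by rewrite (@esum_esum _ _ _ _ _ (fun b m => f (p ^ b * m)%N)).
Qed.
Lemma series_EFin (R : realType) (u : R ^nat) (l : R) :
  series u @ \oo --> l -> (\sum_(i <oo) (u i)%:E = l%:E)%E.
Proof.
move=> ul.
have -> : (fun n => \sum_(0 <= i < n) (u i)%:E)%E = EFin \o series u.
  by apply/funext => n /=; rewrite sumEFin.
by apply: cvg_lim => //; apply: cvg_comp ul _; apply: cvg_id.
Qed.

Lemma geo (R : realType) (x : R) : 0 <= x < 1 ->
  (\sum_(b <oo) (x ^+ b)%:E = ((1 - x)^-1)%:E)%E.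
Proof.
case/andP => x0 x1; apply: series_EFin.
have -> : series (fun b => x ^+ b) = series (geometric 1 x).
  by apply/funext => n; apply: eq_bigr => i _; rewrite /= mul1r.
have := @cvg_geometric_series R 1 x; rewrite mul1r; apply.
by rewrite ger0_norm.
Qed.
Lemma ageo_cvg (R : realType) (x : R) : 0 <= x < 1 ->
  series (fun b => b%:R * x ^+ b) @ \oo --> x / (1 - x) ^+ 2.
Proof.
case/andP => x0 x1.
set u := (fun b : nat => b%:R * x ^+ b).
set S := series u.
set G := series (fun b => x ^+ b).
have x1' : 0 < 1 - x by rewrite subr_gt0.
have Gcv : G @ \oo --> (1 - x)^-1.
  have -> : G = series (geometric 1 x).
    by apply/funext => n; apply: eq_bigr => i _; rewrite /= mul1r.
  have := @cvg_geometric_series R 1 x; rewrite mul1r; apply.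
  by rewrite ger0_norm.
have GE n : G n = (1 - x ^+ n) / (1 - x).
  have -> : G = series (geometric 1 x).
    by apply/funext => m; apply: eq_bigr => i _; rewrite /= mul1r.
  by rewrite geometric_seriesE ?lt_eqF //= mul1r.
have id n : (1 - x) * S n = x * G n - u n.
  elim: n => [|n IH]; first by rewrite /S /G /u /series /= !big_geq // mul0r mulr0 subr0 mulr0.
  rewrite /S /G /series /= !big_nat_recr //= -/(series u n) -/(series _ n).
  rewrite -/S -/G in IH *.
  rewrite mulrDr IH /u /= exprS -natr1.
  change (\sum_(0 <= i < n) x ^+ i) with (G n).
  ring.
have u0 n : 0 <= u n by rewrite /u mulr_ge0 // exprn_ge0.
have Scv : cvgn S.
  apply: nondecreasing_is_cvgn.
    by apply: (@nondecreasing_series _ u xpredT 0) => n _; rewrite u0.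
  exists (x / (1 - x) ^+ 2) => _ [n _ <-].
  rewrite expr2 invfM mulrA ler_pdivlMr // mulrC id.
  rewrite GE lerBlDr (@le_trans _ _ (x / (1 - x))) //.
    rewrite mulrA ler_pM2r ?invr_gt0 // mulrBr mulr1 lerBlDr lerDl.
    by rewrite mulr_ge0 // exprn_ge0.
  by rewrite lerDl.
have -> : S = (fun n => (x * G n - u n) / (1 - x)).
  by apply/funext => n; rewrite -id [(1 - x) * _]mulrC mulfK // gt_eqF.
have L : (fun n => (x * G n - u n) / (1 - x)) @ \oo --> (x * (1-x)^-1 - 0) / (1-x).
  apply: cvgM; last exact: cvg_cst.
  apply: cvgB; last exact: cvg_series_cvg_0.
  by apply: cvgM; [exact: cvg_cst| exact: Gcv].
by rewrite subr0 -mulrA -invfM -expr2 in L.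
Qed.

Lemma geo_cvg (R : realType) (x : R) : 0 <= x < 1 ->
  series (fun b => x ^+ b) @ \oo --> (1 - x)^-1.
Proof.
case/andP => x0 x1.
have -> : series (fun b => x ^+ b) = series (geometric 1 x).
  by apply/funext => n; apply: eq_bigr => i _; rewrite /= mul1r.
have := @cvg_geometric_series R 1 x; rewrite mul1r; apply.
by rewrite ger0_norm.
Qed.

Lemma series_lin (R : realType) (u v : R ^nat) (a c l1 l2 : R) :
  series u @ \oo --> l1 -> series v @ \oo --> l2 ->
  series (fun b => a * u b + c * v b) @ \oo --> a * l1 + c * l2.
Proof.
move=> hu hv.
have -> : series (fun b => a * u b + c * v b) =
          (fun n => a * series u n + c * series v n).
  by apply/funext => n; rewrite /series /= big_split /= -!mulr_sumr.
by apply: cvgD; apply: cvgM => //; exact: cvg_cst.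
Qed.

Definition Aval (R : realType) (s : seq nat) : R :=
  \prod_(p <- s) (p%:R / (p%:R - 1)).
Definition Sig (R : realType) (s : seq nat) : R :=
  \sum_(p <- s) ln (p%:R : R) / (p%:R - 1).

Lemma main_esum (R : realType) (s : seq nat) : uniq s -> all prime s ->
  \esum_(m in [set m | smooth s m]) ((m%:R : R)^-1)%:E = (Aval R s)%:E /\
  \esum_(m in [set m | smooth s m]) (ln (m%:R : R) / m%:R)%:E
    = (Aval R s * Sig R s)%:E.
Proof.
elim: s => [|p s IH] /=.
  move=> _ _; have -> : [set m | smooth [::] m] = [set 1%N].
    by apply/seteqP; split => m /=; rewrite smooth_nil; [move/eqP|move=> ->].
  rewrite !esum_set1 ?lee_fin //= ?invr1 ?ln1 ?mul0r /Aval /Sig ?big_nil ?mulr0 //.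
case/andP => ps us; case/andP => pp aps.
have [IHA IHB] := IH us aps.
have p1 : (1 < (p%:R : R)) by rewrite ltr1n prime_gt1.
have p0 : (0 < (p%:R : R)) by apply: lt_trans p1.
set x := (p%:R : R)^-1.
have x0 : 0 <= x by rewrite invr_ge0 ltW.
have x1 : x < 1 by rewrite invf_lt1.
have A0 : 0 <= Aval R s.
  rewrite /Aval big_seq; apply: prodr_ge0 => q qs; have qp := allP aps q qs.
  by rewrite divr_ge0 // subr_ge0 ler1n prime_gt0.
have S0 : 0 <= Sig R s.
  rewrite /Sig big_seq; apply: sumr_ge0 => q qs; have qp := allP aps q qs.
  by rewrite divr_ge0 // ?subr_ge0 ?ler1n ?prime_gt0 // ln_ge0 // ler1n prime_gt0.
split.
  rewrite (esum_cons _ _ _ _ pp ps); last by move=> m; rewrite lee_fin invr_ge0.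
  transitivity (\esum_(b in [set: nat]) ((x ^+ b * Aval R s)%:E)).
    apply: eq_esum => b _.
    transitivity (\esum_(m in [set m | smooth s m]) ((x ^+ b)%:E * ((m%:R : R)^-1)%:E))%E.
      apply: eq_esum => m /= /andP[m0 _].
      by rewrite -EFinM natrM natrX invfM exprVn.
    by rewrite esumZ_nat ?IHA // ?exprn_ge0 // => n _; rewrite lee_fin invr_ge0.
  rewrite -nneseries_esumT; last by move=> n; rewrite lee_fin mulr_ge0 // exprn_ge0.
  apply: series_EFin.
  have -> : (fun b => x ^+ b * Aval R s) = geometric (Aval R s) x.
    by apply/funext => b /=; rewrite mulrC.
  have -> : Aval R (p :: s) = Aval R s * (1 - x)^-1.
    rewrite /Aval big_cons -/(Aval R s) /x; field.
    by rewrite gt_eqF // subr_eq0 gt_eqF.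
  by apply: cvg_geometric_series; rewrite ger0_norm.
rewrite (esum_cons _ _ _ _ pp ps); last first.
  by move=> [|m]; rewrite lee_fin ?invr0 ?mulr0 // divr_ge0 // ln_ge0 // ler1n.
set A := Aval R s; set Sg := Sig R s.
have lp0 : 0 <= ln (p%:R : R) by rewrite ln_ge0 // ltW.
transitivity (\esum_(b in [set: nat])
   ((b%:R * x ^+ b * ln (p%:R : R) * A + x ^+ b * (A * Sg))%:E)).
  apply: eq_esum => b _.
  transitivity (\esum_(m in [set m | smooth s m])
     ((b%:R * x ^+ b * ln (p%:R : R))%:E * ((m%:R : R)^-1)%:E
      + (x ^+ b)%:E * (ln (m%:R : R) / m%:R)%:E))%E.
    apply: eq_esum => m /= /andP[m0 _].
    rewrite -!EFinM -EFinD; congr EFin.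
    have pm : 0 < (p%:R : R) ^+ b by rewrite exprn_gt0.
    have mm : 0 < (m%:R : R) by rewrite ltr0n.
    rewrite natrM natrX lnM ?posrE //.
    rewrite (@lnXn R b (p%:R) p0) invfM -exprVn -/x.
    rewrite -mulr_natl; ring.

  rewrite esumD; last 2 first.
  - by move=> m _; rewrite -EFinM lee_fin mulr_ge0 // ?invr_ge0 // !mulr_ge0 // exprn_ge0.
  - move=> m /= /andP[m0 _]; rewrite -EFinM lee_fin mulr_ge0 // ?exprn_ge0 //.
    by rewrite divr_ge0 // ln_ge0 // ler1n.
  rewrite !esumZ_nat ?IHA ?IHB -?EFinM -?EFinD //;
  first [ by rewrite exprn_ge0 | by rewrite !mulr_ge0 // exprn_ge0
        | by move=> m _; rewrite lee_fin invr_ge0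
        | by move=> m /andP[m0 _]; rewrite lee_fin divr_ge0 // ln_ge0 // ler1n ].
rewrite -nneseries_esumT; last first.
  by move=> n; rewrite lee_fin addr_ge0 // !mulr_ge0 // exprn_ge0.
apply: series_EFin.
have -> : (fun b : nat => b%:R * x ^+ b * ln (p%:R : R) * A + x ^+ b * (A * Sg))
  = (fun b => (ln (p%:R : R) * A) * (b%:R * x ^+ b) + (A * Sg) * x ^+ b).
  by apply/funext => b; ring.
have xx : 0 <= x < 1 by rewrite x0 x1.
have := series_lin _ _ _ (ln (p%:R : R) * A) (A * Sg) _ _ (ageo_cvg _ _ xx) (geo_cvg _ _ xx).
congr (_ --> _).
rewrite /Aval /Sig !big_cons -/(Aval R s) -/(Sig R s) -/A -/Sg /x.
field.
by rewrite subr_eq0 !gt_eqF.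
Qed.

Lemma range_bij (k : nat) : (0 < k)%N ->
  set_bij [set m | smooth (primes k) m] [set n | in_range k n] (fun m => k * m)%N.
Proof.
move=> k0; split.
- move=> m /= /andP[m0 /allP H].
  rewrite /in_range muln_gt0 k0 m0 dvdn_mulr //=.
  apply/allP => q; rewrite primesM // => /orP[qk|qm].
    by move: qk; rewrite mem_primes => /and3P[].
  by move: (H q qm); rewrite mem_primes => /and3P[].
- move=> m1 m2; rewrite !inE => /= /andP[m10 _] /andP[m20 _] E.
  by apply/eqP; rewrite -(eqn_pmul2l k0) E.
- move=> n /= /and3P[n0 kn /allP H].
  have En : n = (k * (n %/ k))%N by rewrite mulnC divnK.
  have m0 : (0 < n %/ k)%N by move: n0; rewrite {1}En muln_gt0 => /andP[].
  exists (n %/ k)%N; last by rewrite -En.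
  rewrite /= /smooth m0 /=; apply/allP => q qm.
  have qn : q \in primes n.
    move: qm; rewrite !mem_primes n0 => /and3P[-> _ qd] /=.
    by apply: dvdn_trans qd _; exact/dvdn_div.
  have := H q qn; move: qn; rewrite !mem_primes k0 => /and3P[-> _ _] -> //.
Qed.

Lemma Aval_totient (R : realType) (k : nat) : (0 < k)%N ->
  Aval R (primes k) = k%:R / (totient k)%:R.
Proof.
move=> k0.
have t0 : 0 < ((totient k)%:R : R) by rewrite ltr0n totient_gt0.
suff E : (totient k)%:R * Aval R (primes k) = k%:R.
  by rewrite -E; field; rewrite gt_eqF.
have Ek := prod_prime_decomp k0; rewrite prime_decompE big_map in Ek.
rewrite [in RHS]Ek totientE // /Aval !natr_prod -big_split /=.
rewrite big_seq [in RHS]big_seq; apply: eq_bigr => p pk.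
have pp : prime p by move: pk; rewrite mem_primes => /andP[].
have e0 : (0 < logn p k)%N by rewrite logn_gt0.
have p1 : (1 < (p%:R : R)) by rewrite ltr1n prime_gt1.
rewrite natrM -subn1 natrB ?prime_gt0 // !natrX.
rewrite -[in RHS](prednK e0) exprS.
field; by rewrite subr_eq0 gt_eqF.
Qed.

Lemma ln_prod (R : realType) (s : seq nat) (F : nat -> R) :
  (forall i, i \in s -> 0 < F i) ->
  ln (\prod_(i <- s) F i) = \sum_(i <- s) ln (F i).
Proof.
elim: s => [|a s IH] H; first by rewrite !big_nil ln1.
rewrite !big_cons lnM ?posrE ?IH //.
- by move=> i ins; apply: H; rewrite in_cons ins orbT.
- by apply: H; rewrite in_cons eqxx.
- rewrite big_seq; apply: prodr_gt0 => i ins; apply: H; by rewrite in_cons ins orbT.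
Qed.

Lemma Sig_bounds (R : realType) (k : nat) : (0 < k)%N ->
  0 <= Sig R (primes k) <= ln (k%:R : R).
Proof.
move=> k0; apply/andP; split.
  rewrite /Sig big_seq; apply: sumr_ge0 => q qs.
  have qp : prime q by move: qs; rewrite mem_primes => /andP[].
  by rewrite divr_ge0 // ?subr_ge0 ?ler1n ?prime_gt0 // ln_ge0 // ler1n prime_gt0.
have Ek := prod_prime_decomp k0; rewrite prime_decompE big_map in Ek.
rewrite [in X in _ <= X]Ek natr_prod ln_prod; last first.
  by move=> i _; rewrite ltr0n expn_gt0; case: i.
rewrite /Sig big_seq [in X in _ <= X]big_seq; apply: ler_sum => q qs.
have qp : prime q by move: qs; rewrite mem_primes => /andP[].
have e0 : (0 < logn q k)%N by rewrite logn_gt0.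
have q1 : (1 < (q%:R : R)) by rewrite ltr1n prime_gt1.
have l0 : 0 <= ln (q%:R : R) by rewrite ln_ge0 // ltW.
rewrite /= natrX lnXn ?(lt_trans _ q1) // -[ln _ *+ _]mulr_natr.
rewrite ler_pdivrMr ?subr_gt0 //.
have q2 : (2%:R <= (q%:R : R)) by rewrite ler_nat prime_gt1.
apply: (@le_trans _ _ (ln (q%:R : R) * (logn q k)%:R)).
  by rewrite ler_peMr // ler1n.
rewrite ler_peMr //; first by rewrite mulr_ge0.
lra.
Qed.

Lemma esum_summand (R : realType) (k : nat) : (0 < k)%N ->
  (\sum_(n <oo) (summand R k n)%:E = (closed_form R k)%:E)%E.
Proof.
move=> k0.
have kR : 0 < (k%:R : R) by rewrite ltr0n.
have t0 : 0 < ((totient k)%:R : R) by rewrite ltr0n totient_gt0.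
rewrite nneseries_esumT; last first.
  move=> n; rewrite lee_fin /summand; case: ifP => // /and3P[n0 _ _].
  by rewrite divr_ge0 // ln_ge0 // ler1n.
transitivity (\esum_(n in [set n | in_range k n]) (ln (n%:R : R) / n%:R)%:E).
  rewrite [RHS]esum_mkcond; apply: eq_esum => n _; rewrite /summand.
  case: ifPn => h; [by rewrite mem_set | rewrite memNset //=; exact/negP].

rewrite (reindex_esum _ _ _ _ (range_bij _ k0)).
transitivity (\esum_(m in [set m | smooth (primes k) m])
   ((ln (k%:R : R) / k%:R)%:E * ((m%:R : R)^-1)%:E
    + ((k%:R : R)^-1)%:E * (ln (m%:R : R) / m%:R)%:E))%E.
  apply: eq_esum => m /andP[m0 _].
  have mR : 0 < (m%:R : R) by rewrite ltr0n.
  rewrite -!EFinM -EFinD natrM lnM ?posrE //; congr EFin.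
  by field; rewrite !gt_eqF.
have [IA IB] := main_esum R (primes k) (primes_uniq k) (all_prime_primes k).
rewrite esumD; last 2 first.
- move=> m /andP[m0 _]; rewrite -EFinM lee_fin mulr_ge0 // ?invr_ge0 //.
  by rewrite divr_ge0 // ln_ge0 // ler1n.
- move=> m /andP[m0 _]; rewrite -EFinM lee_fin mulr_ge0 // ?invr_ge0 //.
  by rewrite divr_ge0 // ln_ge0 // ler1n.
rewrite !esumZ_nat ?IA ?IB -?EFinM -?EFinD;
  try first [ by rewrite invr_ge0
        | by rewrite divr_ge0 // ln_ge0 // ler1n
        | by move=> m _; rewrite lee_fin invr_ge0
        | by move=> m /andP[m0 _]; rewrite lee_fin divr_ge0 // ln_ge0 // ler1n ].
congr EFin; rewrite Aval_totient // /closed_form /Sig.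
by field; rewrite !gt_eqF.
Qed.

Theorem lemma3p3 (R : realType) :
  (forall k : nat, (0 < k)%N ->
     series (summand R k) @ \oo --> closed_form R k) /\
  (exists c1 c2 : R, 0 < c1 /\ 0 < c2 /\
     forall k : nat, (0 < k)%N ->
       c1 * (ln (k%:R) / (totient k)%:R) <= closed_form R k /\
       closed_form R k <= c2 * (ln (k%:R) / (totient k)%:R)).
Proof.
split.
  move=> k k0.
  have H := esum_summand R k k0.
  have : (fun n => \sum_(0 <= i < n) (summand R k i)%:E)%E @ \oo --> (closed_form R k)%:E.
    rewrite -H; apply: is_cvg_nneseries => n _ _.
    rewrite lee_fin /summand; case: ifP => // /and3P[n0 _ _].
    by rewrite divr_ge0 // ln_ge0 // ler1n.
  move/fine_cvg.
  have -> : (fine \o (fun n => \sum_(0 <= i < n) (summand R k i)%:E)%E) = series (summand R k).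
    by apply/funext => n /=; rewrite sumEFin.
  by [].
exists 1, 2; split; first by [].
split; first by [].
move=> k k0.
have t0 : 0 < ((totient k)%:R : R) by rewrite ltr0n totient_gt0.
have -> : closed_form R k = (Sig R (primes k) + ln (k%:R : R)) / (totient k)%:R.
  by rewrite /closed_form mulrC.
have /andP[] := Sig_bounds R k k0.
move: (Sig R (primes k)) (ln (k%:R : R)) => S L S0 S1.
rewrite mul1r mulrA; split; rewrite ler_pM2r ?invr_gt0 //; lra.
Qed.
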